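(* Let $G=(V,E)$ be a simple undirected graph on $n$ nodes, let $0<\epsilon<\frac13$, $\delta>0$, $p\in(0,1)$, and let $D\subseteq V$ be an $\epsilon^3$-near clique with $|D|\ge\delta n$; let $C=K_{\epsilon^2}(D)\cap D$. Let $S^{(1)}$ be a random subset of $V$ containing each node independently with probability $p/2$, and let $X^*=S^{(1)}\cap C$. Call $X^*$ representative if (1) $|K_{\epsilon^2}(D)\setminus K_{2\epsilon^2}(X^* )|<\epsilon|C|$ and (2) $|K_{2\epsilon^2}(X^* )\setminus K_{3\epsilon^2}(C)|<\epsilon^2|C|$. Then, for every outcome in which $X^*$ is representative, $|C\setminus T_\epsilon(X^* )|\le\frac{11}{2}\epsilon|C|$.
   Context: $\Gamma(v)$ denotes the set of neighbors of $v$. For $Y\subseteq V$ and $0\le\eta\le1$: $K_\eta(Y)=\{v\in V: |\Gamma(v)\cap Y|\ge(1-\eta)|Y|\}$, and $T_\epsilon(X)=K_\epsilon(K_{2\epsilon^2}(X))\cap K_{2\epsilon^2}(X)$. Each undirected edge is counted as two directed edges; a set $D\subseteq V$ is a $\gamma$-near clique if $|\{(u,v)\in D\times D:\{u,v\}\in E\}|\ge(1-\gamma)|D|(|D|-1)$. *)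

(* Defs.v *)
From HB Require Import structures.
From mathcomp Require Import all_boot all_order all_algebra.
Set Implicit Arguments. Unset Strict Implicit. Unset Printing Implicit Defensive.
Import Order.TTheory GRing.Theory Num.Theory.
Local Open Scope ring_scope.

Definition simple_graph (V : finType) (e : rel V) : Prop :=
  symmetric e /\ irreflexive e.

Definition nbrs_in (V : finType) (e : rel V) (v : V) (Y : {set V}) : {set V} :=
  [set u in Y | e v u].

Definition Kset (R : realFieldType) (V : finType) (e : rel V)
    (eta : R) (Y : {set V}) : {set V} :=
  [set v | (1 - eta) * (#|Y|%:R) <= (#|nbrs_in e v Y|%:R : R)].

Definition Tset (R : realFieldType) (V : finType) (e : rel V)
    (eps : R) (X : {set V}) : {set V} :=
  Kset e eps (Kset e (2 * eps ^+ 2) X) :&: Kset e (2 * eps ^+ 2) X.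

Definition near_clique (R : realFieldType) (V : finType) (e : rel V)
    (gamma : R) (D : {set V}) : Prop :=
  (1 - gamma) * (#|D|%:R) * (#|D|%:R - 1)
    <= (#|[set uv in setX D D | e uv.1 uv.2]|%:R : R).

(* Main.v *)
Require Import Defs.
From HB Require Import structures.
From mathcomp Require Import all_boot all_order all_algebra.
From mathcomp Require Import ring lra.
Import Order.TTheory GRing.Theory Num.Theory.
Local Open Scope ring_scope.

Lemma card_split (V : finType) (Y : {set V}) (P : pred V) :
  (#|[set u in Y | P u]| + \sum_(u in Y) (~~ P u : nat) = #|Y|)%N.
Proof.
rewrite -(cardsID [set u | P u] Y); congr (_ + _)%N.
  by apply: eq_card => u; rewrite !inE.
rewrite (big_setID [set u | P u]) /= big1 ?add0n; last first.
  by move=> u; rewrite !inE => /andP[_ ->].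
rewrite -sum1_card; apply: eq_bigr => u; rewrite !inE => /andP[/negbTE -> _] //.
Qed.

Lemma nbrs_split (R : realFieldType) (V : finType) (e : rel V) v (Y : {set V}) :
  (#|nbrs_in e v Y|%:R : R) = #|Y|%:R - (\sum_(u in Y) (~~ e v u : nat))%:R.
Proof. by rewrite -(@card_split _ Y (e v)) natrD addrK. Qed.

Theorem claim5p7 (R : realFieldType) (V : finType) (e : rel V)
    (eps delta p : R) (D S1 : {set V}) :
  simple_graph e ->
  0 < eps -> eps < 3^-1 ->
  0 < delta ->
  0 < p -> p < 1 ->
  near_clique e (eps ^+ 3) D ->
  delta * (#|V|%:R) <= (#|D|%:R : R) ->
  let C := Kset e (eps ^+ 2) D :&: D in
  let X := S1 :&: C in
  (* X^* is representative *)
  (#|Kset e (eps ^+ 2) D :\: Kset e (2 * eps ^+ 2) X|%:R : R) < eps * (#|C|%:R) ->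
  (#|Kset e (2 * eps ^+ 2) X :\: Kset e (3 * eps ^+ 2) C|%:R : R)
     < eps ^+ 2 * (#|C|%:R) ->
  (#|C :\: Tset e eps X|%:R : R) <= (11 / 2) * eps * (#|C|%:R).
Proof.
move=> [esym _] eps0 eps3 _ _ _ _ _ C X.
set Ks := Kset e (2 * eps ^+ 2) X.
set K3 := Kset e (3 * eps ^+ 2) C.
move=> rep1 rep2.
set B := C :\: Kset e eps Ks.
have hCT : (#|C :\: Tset e eps X| <= #|C :\: Ks| + #|B|)%N.
  apply: leq_trans (leq_card_setU _ _); apply: subset_leq_card.
  apply/subsetP => v; rewrite /Tset in_setU !in_setD in_setI -/Ks.
  by case: (v \in C); case: (v \in Ks); case: (v \in Kset e eps Ks).
have hCK : (#|C :\: Ks|%:R : R) < eps * #|C|%:R.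
  apply: le_lt_trans rep1; rewrite ler_nat; apply: subset_leq_card.
  by apply: setSD; apply: subsetIl.
have hCk : (#|C| <= #|Ks| + #|C :\: Ks|)%N.
  rewrite -{1}(cardsID Ks C) leq_add2r; apply: subset_leq_card; exact: subsetIr.
pose a v := (\sum_(u in Ks) (~~ e v u : nat))%N.
pose c u := (\sum_(v in C) (~~ e v u : nat))%N.
have hB : forall v, v \in B -> eps * #|Ks|%:R <= (a v)%:R :> R.
  move=> v; rewrite !inE => /andP[hv _].
  move: hv; rewrite -ltNge (@nbrs_split R V e v Ks) => hv.
  rewrite /a; lra.
have sumB : #|B|%:R * (eps * #|Ks|%:R) <= \sum_(v in C) (a v)%:R :> R.
  rewrite (big_setID B) /= (setIidPr (subsetDl _ _)).
  apply: (@le_trans _ _ (\sum_(i in B) (a i)%:R)).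
    by rewrite mulr_natl -sumr_const; apply: ler_sum.
  by rewrite lerDl; apply: sumr_ge0.
have exch : \sum_(v in C) (a v)%:R = \sum_(u in Ks) (c u)%:R :> R.
  rewrite /a /c -!natr_sum; congr (_%:R); exact: exchange_big.
have ceq : forall u, c u = (\sum_(v in C) (~~ e u v : nat))%N.
  by move=> u; apply: eq_bigr => v _; rewrite esym.
have hc1 : forall u, u \in Ks -> (c u)%:R <= #|C|%:R :> R.
  by move=> u _; rewrite ler_nat -(@card_split _ C (e u)) ceq leq_addl.
have hc3 : forall u, u \in K3 -> (c u)%:R <= 3 * eps ^+ 2 * #|C|%:R :> R.
  move=> u; rewrite inE (@nbrs_split R V e u C).
  rewrite -ceq.
  lra.
have sumK : \sum_(u in Ks) (c u)%:R <= 3 * eps ^+ 2 * #|C|%:R * #|Ks|%:R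
                                       + #|C|%:R * (eps ^+ 2 * #|C|%:R) :> R.
  rewrite (big_setID K3) /=; apply: lerD.
    apply: le_trans (_ : \sum_(u in Ks :&: K3) (3 * eps ^+ 2 * #|C|%:R) <= _).
      by apply: ler_sum => u; rewrite inE => /andP[_]; apply: hc3.
    rewrite sumr_const -(mulr_natr _ #|Ks :&: K3|); apply: ler_wpM2l.
      by apply: mulr_ge0 => //; apply: mulr_ge0 => //; apply: exprn_ge0; apply: ltW.
    by rewrite ler_nat; apply: subset_leq_card; apply: subsetIl.
  apply: le_trans (_ : \sum_(u in Ks :\: K3) (#|C|%:R : R) <= _).
    by apply: ler_sum => u; rewrite inE => /andP[_]; apply: hc1.
  rewrite sumr_const -(mulr_natr _ #|Ks :\: K3|); apply: ler_wpM2l => //; exact: ltW.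
move: sumB; rewrite exch => sumB.
have {sumK}sumB := le_trans sumB sumK.
move: hCT hCk; rewrite -!(ler_nat R) !natrD => hCT hCk.
set t := (#|C :\: Tset e eps X|%:R : R) in hCT *.
set m := (#|C :\: Ks|%:R : R) in hCT hCk hCK *.
set b := (#|B|%:R : R) in hCT sumB *.
set k := (#|Ks|%:R : R) in hCk sumB *.
set cc := (#|C|%:R : R) in hCk hCK sumB *.
have c0 : 0 <= cc by rewrite /cc ler0n.
have m0 : 0 <= m by rewrite /m ler0n.
have b0 : 0 <= b by rewrite /b ler0n.
have k0 : 0 <= k by rewrite /k ler0n.
have ec : eps * cc <= cc / 3 by nra.
have c15 : cc * 2 <= 3 * k by lra.
have kpos : 0 < k by lra.
have hb1 : b * k <= eps * cc * (3 * k + cc).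
  rewrite -(ler_pM2l eps0).
  have -> : eps * (b * k) = b * (eps * k) by ring.
  have -> : eps * (eps * cc * (3 * k + cc)) = 3 * eps ^+ 2 * cc * k + cc * (eps ^+ 2 * cc) by ring.
  exact: sumB.
have hb2 : b * k <= (9 / 2 * eps * cc) * k.
  apply: le_trans hb1 _; have : 0 <= eps * cc by apply: mulr_ge0 => //; exact: ltW.
  nra.
have hb3 : b <= 9 / 2 * eps * cc by rewrite -(ler_pM2r kpos).
lra.
Qed.
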